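(* Every bigroupoid $\mathcal B$ has a path object: the diagonal morphism $\Delta:\mathcal B\to\mathcal B\times\mathcal B$ factors as $\Delta=\langle S,T\rangle\circ R$ with $R:\mathcal B\to\mathcal P\mathcal B$ a weak equivalence and $\langle S,T\rangle:\mathcal P\mathcal B\to\mathcal B\times\mathcal B$ a fibration.
   Context: A bigroupoid $\mathcal B$ consists of: a set $\mathcal B_0$ of 0-cells; for each $A,B\in\mathcal B_0$ a groupoid $\mathcal B(A,B)$ whose objects are 1-cells and whose arrows are 2-cells; composition functors $*$; identity 1-cells $1_A$; inversion functors $(-)^*$; and natural isomorphisms $\mathbf a:(h*g)*f\Rightarrow h*(g*f)$, $\mathbf l:1_B*f\Rightarrow f$, $\mathbf r:f*1_A\Rightarrow f$, $\mathbf e:f^**f\Rightarrow 1_A$, $\mathbf i:1_B\Rightarrow f*f^*$, such that the pentagon for $\mathbf a$ commutes, $(\mathrm{id}*\mathbf l)\circ\mathbf a=\mathbf r*\mathrm{id}$, and $\mathbf r_f\circ(\mathrm{id}*\mathbf e_f)\circ\mathbf a\circ(\mathbf i_f*\mathrm{id})=\mathbf l_f$. A morphism $(F,\phi):\mathcal A\to\mathcal B$ consists of a function on 0-cells, functors $F_{A,A'}:\mathcal A(A,A')\to\mathcal B(FA,FA')$ and natural isomorphisms $\phi_{g,f}:Fg*Ff\Rightarrow F(g*f)$, $\phi_A:1_{FA}\Rightarrow F1_A$, $\phi_f:(Ff)^*\Rightarrow F(f^* )$ satisfying $F\mathbf a\circ\phi\circ(\phi*\mathrm{id})=\phi\circ(\mathrm{id}*\phi)\circ\mathbf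 a$, $F\mathbf r\circ\phi\circ(\mathrm{id}*\phi_A)=\mathbf r$, $F\mathbf l\circ\phi\circ(\phi_B*\mathrm{id})=\mathbf l$, $F\mathbf e\circ\phi\circ(\phi_f*\mathrm{id})=\phi_A\circ\mathbf e$, $F\mathbf i\circ\phi_B=\phi\circ(\mathrm{id}*\phi_f)\circ\mathbf i$. The product $\mathcal B\times\mathcal B$ is formed componentwise (0-cells, hom-groupoids and all structure taken as products), and $\Delta$ is the strict diagonal morphism. Fibration: (1) for every 0-cell $A'$ of $\mathcal A$ and 1-cell $b:B\to FA'$ there is $a:A\to A'$ with $FA=B$, $Fa=b$; (2) for every 1-cell $a'$ and 2-cell $\beta:b\Rightarrow Fa'$ there is $\alpha:a\Rightarrow a'$ with $Fa=b$, $F\alpha=\beta$. Weak equivalence: every 0-cell $B$ of the codomain admits a 1-cell $B\to FA'$ for some 0-cell $A'$, and each $F_{A,A'}$ is an equivalence of categories. *)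

(* Defs.v *)
(* The hom-groupoid B(A,A') has objects  C1 A A'  (1-cells)
   and arrows  C2 f g  (2-cells), with vertical composition  vcomp,
   identities  id2  and inverses  vinv.  The composition functor is
   (comp1, hcomp), the inversion functor is (inv1, inv2). *)
Record Bigroupoid := mkBigroupoid {
  C0 : Type;
  C1 : C0 -> C0 -> Type;
  C2 : forall {A A' : C0}, C1 A A' -> C1 A A' -> Type;
  vcomp : forall {A A'} {f g h : C1 A A'}, C2 g h -> C2 f g -> C2 f h;
  id2 : forall {A A'} (f : C1 A A'), C2 f f;
  vinv : forall {A A'} {f g : C1 A A'}, C2 f g -> C2 g f;
  vassoc : forall A A' (f g h k : C1 A A') (c : C2 h k) (b : C2 g h) (a : C2 f g),
      vcomp c (vcomp b a) = vcomp (vcomp c b) a;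
  vid_l : forall A A' (f g : C1 A A') (a : C2 f g), vcomp (id2 g) a = a;
  vid_r : forall A A' (f g : C1 A A') (a : C2 f g), vcomp a (id2 f) = a;
  vinv_l : forall A A' (f g : C1 A A') (a : C2 f g), vcomp (vinv a) a = id2 f;
  vinv_r : forall A A' (f g : C1 A A') (a : C2 f g), vcomp a (vinv a) = id2 g;
  comp1 : forall {A A' A''}, C1 A' A'' -> C1 A A' -> C1 A A'';
  hcomp : forall {A A' A''} {g g' : C1 A' A''} {f f' : C1 A A'},
      C2 g g' -> C2 f f' -> C2 (comp1 g f) (comp1 g' f');
  hcomp_id : forall A A' A'' (g : C1 A' A'') (f : C1 A A'),
      hcomp (id2 g) (id2 f) = id2 (comp1 g f);
  hcomp_vcomp : forall A A' A'' (g g' g'' : C1 A' A'') (f f' f'' : C1 A A')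
      (b' : C2 g' g'') (b : C2 g g') (a' : C2 f' f'') (a : C2 f f'),
      hcomp (vcomp b' b) (vcomp a' a) = vcomp (hcomp b' a') (hcomp b a);
  unit1 : forall A, C1 A A;
  inv1 : forall {A A'}, C1 A A' -> C1 A' A;
  inv2 : forall {A A'} {f g : C1 A A'}, C2 f g -> C2 (inv1 f) (inv1 g);
  inv2_id : forall A A' (f : C1 A A'), inv2 (id2 f) = id2 (inv1 f);
  inv2_vcomp : forall A A' (f g h : C1 A A') (b : C2 g h) (a : C2 f g),
      inv2 (vcomp b a) = vcomp (inv2 b) (inv2 a);
  ass : forall {A A' A'' A'''} (h : C1 A'' A''') (g : C1 A' A'') (f : C1 A A'),
      C2 (comp1 (comp1 h g) f) (comp1 h (comp1 g f));
  ass_nat : forall A A' A'' A''' (h h' : C1 A'' A''') (g g' : C1 A' A'')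
      (f f' : C1 A A') (c : C2 h h') (b : C2 g g') (a : C2 f f'),
      vcomp (ass h' g' f') (hcomp (hcomp c b) a)
      = vcomp (hcomp c (hcomp b a)) (ass h g f);
  lun : forall {A A'} (f : C1 A A'), C2 (comp1 (unit1 A') f) f;
  lun_nat : forall A A' (f f' : C1 A A') (a : C2 f f'),
      vcomp (lun f') (hcomp (id2 (unit1 A')) a) = vcomp a (lun f);
  run : forall {A A'} (f : C1 A A'), C2 (comp1 f (unit1 A)) f;
  run_nat : forall A A' (f f' : C1 A A') (a : C2 f f'),
      vcomp (run f') (hcomp a (id2 (unit1 A))) = vcomp a (run f);
  ev : forall {A A'} (f : C1 A A'), C2 (comp1 (inv1 f) f) (unit1 A);
  ev_nat : forall A A' (f f' : C1 A A') (a : C2 f f'),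
      vcomp (ev f') (hcomp (inv2 a) a) = ev f;
  coev : forall {A A'} (f : C1 A A'), C2 (unit1 A') (comp1 f (inv1 f));
  coev_nat : forall A A' (f f' : C1 A A') (a : C2 f f'),
      coev f' = vcomp (hcomp a (inv2 a)) (coev f);
  pentagon : forall A A' A'' A''' A'''' (k : C1 A''' A'''') (h : C1 A'' A''')
      (g : C1 A' A'') (f : C1 A A'),
      vcomp (ass k h (comp1 g f)) (ass (comp1 k h) g f)
      = vcomp (hcomp (id2 k) (ass h g f))
          (vcomp (ass k (comp1 h g) f) (hcomp (ass k h g) (id2 f)));
  triangle : forall A A' A'' (g : C1 A' A'') (f : C1 A A'),
      vcomp (hcomp (id2 g) (lun f)) (ass g (unit1 A') f) = hcomp (run g) (id2 f);
  ev_coev : forall A A' (f : C1 A A'),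
      vcomp (run f) (vcomp (hcomp (id2 f) (ev f))
        (vcomp (ass f (inv1 f) f) (hcomp (coev f) (id2 f)))) = lun f
}.

Arguments C0 : clear implicits.
Arguments C1 {_} _ _.
Arguments C2 {_ _ _} _ _.
Arguments vcomp {_ _ _ _ _ _} _ _.
Arguments id2 {_ _ _} _.
Arguments vinv {_ _ _ _ _} _.
Arguments comp1 {_ _ _ _} _ _.
Arguments hcomp {_ _ _ _ _ _ _ _} _ _.
Arguments unit1 {_} _.
Arguments inv1 {_ _ _} _.
Arguments inv2 {_ _ _ _ _} _.
Arguments ass {_ _ _ _ _} _ _ _.
Arguments lun {_ _ _} _.
Arguments run {_ _ _} _.
Arguments ev {_ _ _} _.
Arguments coev {_ _ _} _.

(* Morphisms (F, phi) : B -> C.  Data and axioms are split so that the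
   composite is computed on data. *)
Record MorphData (B C : Bigroupoid) := mkMorphData {
  F0 : C0 B -> C0 C;
  F1 : forall {A A'}, @C1 B A A' -> C1 (F0 A) (F0 A');
  F2 : forall {A A'} {f g : @C1 B A A'}, C2 f g -> C2 (F1 f) (F1 g);
  phc : forall {A A' A''} (g : @C1 B A' A'') (f : C1 A A'),
      C2 (comp1 (F1 g) (F1 f)) (F1 (comp1 g f));
  phu : forall A : C0 B, C2 (unit1 (F0 A)) (F1 (unit1 A));
  phi : forall {A A'} (f : @C1 B A A'), C2 (inv1 (F1 f)) (F1 (inv1 f))
}.
Arguments mkMorphData {B C}.
Arguments F0 {B C} _ _.
Arguments F1 {B C} _ {_ _} _.
Arguments F2 {B C} _ {_ _ _ _} _.
Arguments phc {B C} _ {_ _ _} _ _.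
Arguments phu {B C} _ _.
Arguments phi {B C} _ {_ _} _.

Record IsMorph {B C : Bigroupoid} (F : MorphData B C) : Prop := {
  F2_id : forall A A' (f : @C1 B A A'), F2 F (id2 f) = id2 (F1 F f);
  F2_vcomp : forall A A' (f g h : @C1 B A A') (b : C2 g h) (a : C2 f g),
      F2 F (vcomp b a) = vcomp (F2 F b) (F2 F a);
  (* naturality of phi_{g,f} and phi_f  (phi_A is between constant functors) *)
  phc_nat : forall A A' A'' (g g' : @C1 B A' A'') (f f' : C1 A A')
      (b : C2 g g') (a : C2 f f'),
      vcomp (phc F g' f') (hcomp (F2 F b) (F2 F a))
      = vcomp (F2 F (hcomp b a)) (phc F g f);
  phi_nat : forall A A' (f f' : @C1 B A A') (a : C2 f f'),
      vcomp (phi F f') (inv2 (F2 F a)) = vcomp (F2 F (inv2 a)) (phi F f);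
  coh_ass : forall A A' A'' A''' (h : @C1 B A'' A''') (g : C1 A' A'') (f : C1 A A'),
      vcomp (F2 F (ass h g f))
        (vcomp (phc F (comp1 h g) f) (hcomp (phc F h g) (id2 (F1 F f))))
      = vcomp (phc F h (comp1 g f))
          (vcomp (hcomp (id2 (F1 F h)) (phc F g f)) (ass (F1 F h) (F1 F g) (F1 F f)));
  coh_run : forall A A' (f : @C1 B A A'),
      vcomp (F2 F (run f))
        (vcomp (phc F f (unit1 A)) (hcomp (id2 (F1 F f)) (phu F A)))
      = run (F1 F f);
  coh_lun : forall A A' (f : @C1 B A A'),
      vcomp (F2 F (lun f))
        (vcomp (phc F (unit1 A') f) (hcomp (phu F A') (id2 (F1 F f))))
      = lun (F1 F f);
  coh_ev : forall A A' (f : @C1 B A A'),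
      vcomp (F2 F (ev f))
        (vcomp (phc F (inv1 f) f) (hcomp (phi F f) (id2 (F1 F f))))
      = vcomp (phu F A) (ev (F1 F f));
  coh_coev : forall A A' (f : @C1 B A A'),
      vcomp (F2 F (coev f)) (phu F A')
      = vcomp (phc F f (inv1 f))
          (vcomp (hcomp (id2 (F1 F f)) (phi F f)) (coev (F1 F f)))
}.

Record Morph (B C : Bigroupoid) := mkMorph {
  mdata :> MorphData B C;
  mlaws : IsMorph mdata
}.
Arguments mkMorph {B C}.
Arguments mdata {B C} _.
Arguments mlaws {B C} _.

Definition mcomp_data {B C D : Bigroupoid} (G : MorphData C D) (F : MorphData B C)
  : MorphData B D :=
  mkMorphData (fun A => F0 G (F0 F A))
    (fun A A' f => F1 G (F1 F f))
    (fun A A' f g a => F2 G (F2 F a))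
    (fun A A' A'' g f => vcomp (F2 G (phc F g f)) (phc G (F1 F g) (F1 F f)))
    (fun A => vcomp (F2 G (phu F A)) (phu G (F0 F A)))
    (fun A A' f => vcomp (F2 G (phi F f)) (phi G (F1 F f))).


Arguments vassoc {_ _ _ _ _ _ _} _ _ _.
Arguments vid_l {_ _ _ _ _} _.
Arguments vid_r {_ _ _ _ _} _.
Arguments vinv_l {_ _ _ _ _} _.
Arguments vinv_r {_ _ _ _ _} _.
Arguments hcomp_id {_ _ _ _} _ _.
Arguments hcomp_vcomp {_ _ _ _ _ _ _ _ _ _} _ _ _ _.
Arguments inv2_id {_ _ _} _.
Arguments inv2_vcomp {_ _ _ _ _ _} _ _.
Arguments ass_nat {_ _ _ _ _ _ _ _ _ _ _} _ _ _.
Arguments lun_nat {_ _ _ _ _} _.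
Arguments run_nat {_ _ _ _ _} _.
Arguments ev_nat {_ _ _ _ _} _.
Arguments coev_nat {_ _ _ _ _} _.
Arguments pentagon {_ _ _ _ _ _} _ _ _ _.
Arguments triangle {_ _ _ _} _ _.
Arguments ev_coev {_ _ _} _.
Arguments F2_id {_ _ _} _ {_ _} _.
Arguments F2_vcomp {_ _ _} _ {_ _ _ _ _} _ _.
Arguments phc_nat {_ _ _} _ {_ _ _ _ _ _ _} _ _.
Arguments phi_nat {_ _ _} _ {_ _ _ _} _.
Arguments coh_ass {_ _ _} _ {_ _ _ _} _ _ _.
Arguments coh_run {_ _ _} _ {_ _} _.
Arguments coh_lun {_ _ _} _ {_ _} _.
Arguments coh_ev {_ _ _} _ {_ _} _.
Arguments coh_coev {_ _ _} _ {_ _} _.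
Lemma hcomp_vl (B : Bigroupoid) A A' A'' (g g' g'' : @C1 B A' A'') (f : C1 A A')
  (x : C2 g' g'') (y : C2 g g') :
  hcomp (vcomp x y) (id2 f) = vcomp (hcomp x (id2 f)) (hcomp y (id2 f)).
Proof. rewrite <- hcomp_vcomp, vid_l. reflexivity. Qed.
Lemma hcomp_vr (B : Bigroupoid) A A' A'' (g : @C1 B A' A'') (f f' f'' : C1 A A')
  (x : C2 f' f'') (y : C2 f f') :
  hcomp (id2 g) (vcomp x y) = vcomp (hcomp (id2 g) x) (hcomp (id2 g) y).
Proof. rewrite <- hcomp_vcomp, vid_l. reflexivity. Qed.
Section Comp.
Variables (B C D : Bigroupoid) (G : Morph C D) (F : Morph B C).
Lemma mcomp_laws : IsMorph (mcomp_data G F).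
Proof.
  pose proof (mlaws G) as HG; pose proof (mlaws F) as HF.
  split; simpl; intros.
  - rewrite (F2_id HF), (F2_id HG); reflexivity.
  - rewrite (F2_vcomp HF), (F2_vcomp HG); reflexivity.
  - repeat rewrite <- vassoc.
    rewrite (phc_nat HG). rewrite vassoc, <- (F2_vcomp HG), (phc_nat HF), (F2_vcomp HG), <- vassoc. reflexivity.
  - repeat rewrite <- vassoc.
    rewrite (phi_nat HG). rewrite vassoc, <- (F2_vcomp HG), (phi_nat HF), (F2_vcomp HG), <- vassoc. reflexivity.
  - rewrite hcomp_vl, hcomp_vr. repeat rewrite <- vassoc.
    rewrite <- (F2_id HG (F1 F f)).
    rewrite (vassoc (phc G _ _) (hcomp (F2 G _) (F2 G _))).
    rewrite (phc_nat HG).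
    repeat rewrite <- vassoc.
    rewrite (vassoc (F2 G (phc F _ _))), <- (F2_vcomp HG), (vassoc (F2 G (F2 F _))), <- (F2_vcomp HG).
    rewrite (coh_ass HF), !(F2_vcomp HG), (F2_id HG). repeat rewrite <- vassoc.
    rewrite (coh_ass HG).
    rewrite (vassoc (F2 G (hcomp _ _))), <- (phc_nat HG), (F2_id HG), <- vassoc. reflexivity.
  - rewrite hcomp_vr. repeat rewrite <- vassoc.
    rewrite <- (F2_id HG (F1 F f)).
    rewrite (vassoc (phc G _ _)), (phc_nat HG).
    repeat rewrite <- vassoc.
    rewrite (vassoc (F2 G (phc F _ _))), <- (F2_vcomp HG), (vassoc (F2 G (F2 F _))), <- (F2_vcomp HG).
    rewrite (coh_run HF), (F2_id HG). apply (coh_run HG).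
  - rewrite hcomp_vl. repeat rewrite <- vassoc.
    rewrite <- (F2_id HG (F1 F f)).
    rewrite (vassoc (phc G _ _)), (phc_nat HG).
    repeat rewrite <- vassoc.
    rewrite (vassoc (F2 G (phc F _ _))), <- (F2_vcomp HG), (vassoc (F2 G (F2 F _))), <- (F2_vcomp HG).
    rewrite (coh_lun HF), (F2_id HG). apply (coh_lun HG).
  - rewrite hcomp_vl. repeat rewrite <- vassoc.
    rewrite <- (F2_id HG (F1 F f)).
    rewrite (vassoc (phc G _ _)), (phc_nat HG).
    repeat rewrite <- vassoc.
    rewrite (vassoc (F2 G (phc F _ _))), <- (F2_vcomp HG), (vassoc (F2 G (F2 F _))), <- (F2_vcomp HG).
    rewrite (coh_ev HF), (F2_vcomp HG). rewrite <- vassoc, (F2_id HG), (coh_ev HG).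
    reflexivity.
  - rewrite hcomp_vr. repeat rewrite <- vassoc.
    rewrite (vassoc (F2 G (F2 F _))), <- (F2_vcomp HG), (coh_coev HF), !(F2_vcomp HG).
    repeat rewrite <- vassoc. rewrite (coh_coev HG).
    rewrite (vassoc (F2 G (hcomp _ _))), <- (phc_nat HG), (F2_id HG). repeat rewrite <- vassoc. reflexivity.
Qed.
End Comp.
Arguments mcomp_laws {B C D} G F.

Definition mcomp {B C D : Bigroupoid} (G : Morph C D) (F : Morph B C) : Morph B D :=
  mkMorph (mcomp_data G F) (mcomp_laws G F).

Section Prod.
Variables B B' : Bigroupoid.

Definition pC0 : Type := (C0 B * C0 B')%type.
Definition pC1 (X Y : pC0) : Type := (C1 (fst X) (fst Y) * C1 (snd X) (snd Y))%type.
Definition pC2 {X Y : pC0} (u v : pC1 X Y) : Type :=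
  (C2 (fst u) (fst v) * C2 (snd u) (snd v))%type.
Definition pvcomp {X Y} {f g h : pC1 X Y} (b : pC2 g h) (a : pC2 f g) : pC2 f h :=
  (vcomp (fst b) (fst a), vcomp (snd b) (snd a)).
Definition pid2 {X Y} (f : pC1 X Y) : pC2 f f := (id2 (fst f), id2 (snd f)).
Definition pvinv {X Y} {f g : pC1 X Y} (a : pC2 f g) : pC2 g f :=
  (vinv (fst a), vinv (snd a)).
Definition pcomp1 {X Y Z} (g : pC1 Y Z) (f : pC1 X Y) : pC1 X Z :=
  (comp1 (fst g) (fst f), comp1 (snd g) (snd f)).
Definition phcomp {X Y Z} {g g' : pC1 Y Z} {f f' : pC1 X Y} (b : pC2 g g') (a : pC2 f f')
  : pC2 (pcomp1 g f) (pcomp1 g' f') :=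
  (hcomp (fst b) (fst a), hcomp (snd b) (snd a)).
Definition punit1 (X : pC0) : pC1 X X := (unit1 (fst X), unit1 (snd X)).
Definition pinv1 {X Y} (f : pC1 X Y) : pC1 Y X := (inv1 (fst f), inv1 (snd f)).
Definition pinv2 {X Y} {f g : pC1 X Y} (a : pC2 f g) : pC2 (pinv1 f) (pinv1 g) :=
  (inv2 (fst a), inv2 (snd a)).
Definition pass {X Y Z W} (h : pC1 Z W) (g : pC1 Y Z) (f : pC1 X Y)
  : pC2 (pcomp1 (pcomp1 h g) f) (pcomp1 h (pcomp1 g f)) :=
  (ass (fst h) (fst g) (fst f), ass (snd h) (snd g) (snd f)).
Definition plun {X Y} (f : pC1 X Y) : pC2 (pcomp1 (punit1 Y) f) f :=
  (lun (fst f), lun (snd f)).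
Definition prun {X Y} (f : pC1 X Y) : pC2 (pcomp1 f (punit1 X)) f :=
  (run (fst f), run (snd f)).
Definition pev {X Y} (f : pC1 X Y) : pC2 (pcomp1 (pinv1 f) f) (punit1 X) :=
  (ev (fst f), ev (snd f)).
Definition pcoev {X Y} (f : pC1 X Y) : pC2 (punit1 Y) (pcomp1 f (pinv1 f)) :=
  (coev (fst f), coev (snd f)).

Ltac prod_solve :=
  intros;
  unfold pC0, pC1, pC2, pvcomp, pid2, pvinv, pcomp1, phcomp, punit1, pinv1, pinv2,
    pass, plun, prun, pev, pcoev in *;
  repeat match goal with x : prod _ _ |- _ => destruct x end;
  simpl in *; f_equal;
  first [ apply vassoc | apply vid_l | apply vid_r | apply vinv_l | apply vinv_r
        | apply hcomp_id | apply hcomp_vcomp | apply inv2_id | apply inv2_vcomp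
        | apply ass_nat | apply lun_nat | apply run_nat | apply ev_nat
        | apply coev_nat | apply pentagon | apply triangle | apply ev_coev ].

Lemma p_vassoc X Y (f g h k : pC1 X Y) (c : pC2 h k) (b : pC2 g h) (a : pC2 f g) :
  pvcomp c (pvcomp b a) = pvcomp (pvcomp c b) a.
Proof. prod_solve. Qed.
Lemma p_vid_l X Y (f g : pC1 X Y) (a : pC2 f g) : pvcomp (pid2 g) a = a.
Proof. prod_solve. Qed.
Lemma p_vid_r X Y (f g : pC1 X Y) (a : pC2 f g) : pvcomp a (pid2 f) = a.
Proof. prod_solve. Qed.
Lemma p_vinv_l X Y (f g : pC1 X Y) (a : pC2 f g) : pvcomp (pvinv a) a = pid2 f.
Proof. prod_solve. Qed.
Lemma p_vinv_r X Y (f g : pC1 X Y) (a : pC2 f g) : pvcomp a (pvinv a) = pid2 g.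
Proof. prod_solve. Qed.
Lemma p_hcomp_id X Y Z (g : pC1 Y Z) (f : pC1 X Y) :
  phcomp (pid2 g) (pid2 f) = pid2 (pcomp1 g f).
Proof. prod_solve. Qed.
Lemma p_hcomp_vcomp X Y Z (g g' g'' : pC1 Y Z) (f f' f'' : pC1 X Y)
  (b' : pC2 g' g'') (b : pC2 g g') (a' : pC2 f' f'') (a : pC2 f f') :
  phcomp (pvcomp b' b) (pvcomp a' a) = pvcomp (phcomp b' a') (phcomp b a).
Proof. prod_solve. Qed.
Lemma p_inv2_id X Y (f : pC1 X Y) : pinv2 (pid2 f) = pid2 (pinv1 f).
Proof. prod_solve. Qed.
Lemma p_inv2_vcomp X Y (f g h : pC1 X Y) (b : pC2 g h) (a : pC2 f g) :
  pinv2 (pvcomp b a) = pvcomp (pinv2 b) (pinv2 a).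
Proof. prod_solve. Qed.
Lemma p_ass_nat X Y Z W (h h' : pC1 Z W) (g g' : pC1 Y Z) (f f' : pC1 X Y)
  (c : pC2 h h') (b : pC2 g g') (a : pC2 f f') :
  pvcomp (pass h' g' f') (phcomp (phcomp c b) a)
  = pvcomp (phcomp c (phcomp b a)) (pass h g f).
Proof. prod_solve. Qed.
Lemma p_lun_nat X Y (f f' : pC1 X Y) (a : pC2 f f') :
  pvcomp (plun f') (phcomp (pid2 (punit1 Y)) a) = pvcomp a (plun f).
Proof. prod_solve. Qed.
Lemma p_run_nat X Y (f f' : pC1 X Y) (a : pC2 f f') :
  pvcomp (prun f') (phcomp a (pid2 (punit1 X))) = pvcomp a (prun f).
Proof. prod_solve. Qed.
Lemma p_ev_nat X Y (f f' : pC1 X Y) (a : pC2 f f') :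
  pvcomp (pev f') (phcomp (pinv2 a) a) = pev f.
Proof. prod_solve. Qed.
Lemma p_coev_nat X Y (f f' : pC1 X Y) (a : pC2 f f') :
  pcoev f' = pvcomp (phcomp a (pinv2 a)) (pcoev f).
Proof. prod_solve. Qed.
Lemma p_pentagon X Y Z W V (k : pC1 W V) (h : pC1 Z W) (g : pC1 Y Z) (f : pC1 X Y) :
  pvcomp (pass k h (pcomp1 g f)) (pass (pcomp1 k h) g f)
  = pvcomp (phcomp (pid2 k) (pass h g f))
      (pvcomp (pass k (pcomp1 h g) f) (phcomp (pass k h g) (pid2 f))).
Proof. prod_solve. Qed.
Lemma p_triangle X Y Z (g : pC1 Y Z) (f : pC1 X Y) :
  pvcomp (phcomp (pid2 g) (plun f)) (pass g (punit1 Y) f) = phcomp (prun g) (pid2 f).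
Proof. prod_solve. Qed.
Lemma p_ev_coev X Y (f : pC1 X Y) :
  pvcomp (prun f) (pvcomp (phcomp (pid2 f) (pev f))
    (pvcomp (pass f (pinv1 f) f) (phcomp (pcoev f) (pid2 f)))) = plun f.
Proof. prod_solve. Qed.

Definition ProdBG : Bigroupoid :=
  {| C0 := pC0; C1 := pC1; C2 := @pC2; vcomp := @pvcomp; id2 := @pid2;
     vinv := @pvinv; vassoc := p_vassoc; vid_l := p_vid_l; vid_r := p_vid_r;
     vinv_l := p_vinv_l; vinv_r := p_vinv_r; comp1 := @pcomp1; hcomp := @phcomp;
     hcomp_id := p_hcomp_id; hcomp_vcomp := p_hcomp_vcomp; unit1 := punit1;
     inv1 := @pinv1; inv2 := @pinv2; inv2_id := p_inv2_id;
     inv2_vcomp := p_inv2_vcomp; ass := @pass; ass_nat := p_ass_nat;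
     lun := @plun; lun_nat := p_lun_nat; run := @prun; run_nat := p_run_nat;
     ev := @pev; ev_nat := p_ev_nat; coev := @pcoev; coev_nat := p_coev_nat;
     pentagon := p_pentagon; triangle := p_triangle; ev_coev := p_ev_coev |}.
End Prod.
Definition diag_data (B : Bigroupoid) : MorphData B (ProdBG B B) :=
  @mkMorphData B (ProdBG B B) (fun A => (A, A))
    (fun A A' f => (f, f))
    (fun A A' f g a => (a, a))
    (fun A A' A'' g f => (id2 (comp1 g f), id2 (comp1 g f)))
    (fun A => (id2 (unit1 A), id2 (unit1 A)))
    (fun A A' f => (id2 (inv1 f), id2 (inv1 f))).

Lemma diag_laws (B : Bigroupoid) : IsMorph (diag_data B).
Proof.
  split; intros; cbn; unfold pvcomp, phcomp, pid2, pinv2, pass, prun, plun, pev, pcoev; cbn; f_equal;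
  repeat first [ rewrite hcomp_id | rewrite inv2_id | rewrite vid_l | rewrite vid_r ];
  first [ reflexivity | apply ass_nat | apply hcomp_id | apply triangle ].
Qed.

Definition diag (B : Bigroupoid) : Morph B (ProdBG B B) :=
  mkMorph (diag_data B) (diag_laws B).

(* The equalities "F A = X, F a = b" (resp. "F a = b, F alpha = beta") are
   stated as equalities of dependent pairs. *)
Definition fibration {B C : Bigroupoid} (F : MorphData B C) : Prop :=
  (forall (A' : C0 B) (X : C0 C) (b : C1 X (F0 F A')),
     exists (A : C0 B) (a : C1 A A'),
       existT (fun Y => C1 Y (F0 F A')) (F0 F A) (F1 F a)
       = existT (fun Y => C1 Y (F0 F A')) X b)
  /\
  (forall (A A' : C0 B) (a' : C1 A A') (b : C1 (F0 F A) (F0 F A'))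
          (beta : C2 b (F1 F a')),
     exists (a : C1 A A') (alpha : C2 a a'),
       existT (fun y => C2 y (F1 F a')) (F1 F a) (F2 F alpha)
       = existT (fun y => C2 y (F1 F a')) b beta).

(* F_{A,A'} : B(A,A') -> C(FA,FA') is an equivalence of categories:
   there is a functor G back and natural isomorphisms GF ~ 1 and FG ~ 1
   (in a groupoid every natural transformation is a natural isomorphism). *)
Definition hom_equivalence {B C : Bigroupoid} (F : MorphData B C) (A A' : C0 B) : Prop :=
  exists (G1 : C1 (F0 F A) (F0 F A') -> C1 A A')
         (G2 : forall x y : C1 (F0 F A) (F0 F A'), C2 x y -> C2 (G1 x) (G1 y)),
    (forall x, G2 x x (id2 x) = id2 (G1 x))
    /\ (forall x y z (b : C2 y z) (a : C2 x y),
          G2 x z (vcomp b a) = vcomp (G2 y z b) (G2 x y a))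
    /\ (exists eta : forall a : C1 A A', C2 (G1 (F1 F a)) a,
          forall (a a' : C1 A A') (al : C2 a a'),
            vcomp (eta a') (G2 _ _ (F2 F al)) = vcomp al (eta a))
    /\ (exists eps : forall x : C1 (F0 F A) (F0 F A'), C2 (F1 F (G1 x)) x,
          forall x x' (be : C2 x x'),
            vcomp (eps x') (F2 F (G2 x x' be)) = vcomp be (eps x)).

Definition weak_equivalence {B C : Bigroupoid} (F : MorphData B C) : Prop :=
  (forall X : C0 C, exists A' : C0 B, inhabited (C1 X (F0 F A')))
  /\ (forall A A' : C0 B, hom_equivalence F A A').

(* Main.v *)
Require Import Defs.
From Stdlib Require Import FunctionalExtensionality ProofIrrelevance.

Section G.
Context {B : Bigroupoid}.
Local Notation "b ∘ a" := (vcomp b a) (at level 40, left associativity).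
Local Notation "b ⋆ a" := (hcomp b a) (at level 35).

Lemma vinv_id {A A'} (f : @C1 B A A') : vinv (id2 f) = id2 f.
Proof. rewrite <- (vid_l (vinv (id2 f))). apply vinv_r. Qed.

Lemma vcancel_r {A A'} {f g h : @C1 B A A'} (x y : C2 g h) (a : C2 f g) :
  x ∘ a = y ∘ a -> x = y.
Proof. intro H. rewrite <- (vid_r x), <- (vid_r y), <- (vinv_r a), !vassoc, H. reflexivity. Qed.
Lemma vcancel_l {A A'} {f g h : @C1 B A A'} (x y : C2 f g) (a : C2 g h) :
  a ∘ x = a ∘ y -> x = y.
Proof. intro H. rewrite <- (vid_l x), <- (vid_l y), <- (vinv_l a), <- !vassoc, H. reflexivity. Qed.

Lemma vinv_unique {A A'} {f g : @C1 B A A'} (a : C2 f g) (b : C2 g f) :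
  b ∘ a = id2 f -> b = vinv a.
Proof. intro H. apply (vcancel_r _ _ a). rewrite H, vinv_l. reflexivity. Qed.

Lemma vinv_vinv {A A'} {f g : @C1 B A A'} (a : C2 f g) : vinv (vinv a) = a.
Proof. symmetry. apply vinv_unique. apply vinv_r. Qed.

Lemma vinv_vcomp {A A'} {f g h : @C1 B A A'} (b : C2 g h) (a : C2 f g) :
  vinv (b ∘ a) = vinv a ∘ vinv b.
Proof. symmetry; apply vinv_unique. rewrite <- vassoc, (vassoc (vinv b)), vinv_l, vid_l, vinv_l. reflexivity. Qed.

Lemma hcomp_vinv {A A' A''} {g g' : @C1 B A' A''} {f f' : C1 A A'} (b : C2 g g') (a : C2 f f') :
  hcomp (vinv b) (vinv a) = vinv (hcomp b a).
Proof. apply vinv_unique. rewrite <- hcomp_vcomp, !vinv_l. apply hcomp_id. Qed.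

Lemma hvl {A A' A''} {g g' g'' : @C1 B A' A''} (f : C1 A A') (x : C2 g' g'') (y : C2 g g') :
  (x ∘ y) ⋆ id2 f = (x ⋆ id2 f) ∘ (y ⋆ id2 f).
Proof. rewrite <- hcomp_vcomp, vid_l. reflexivity. Qed.
Lemma hvr {A A' A''} (g : @C1 B A' A'') {f f' f'' : C1 A A'} (x : C2 f' f'') (y : C2 f f') :
  id2 g ⋆ (x ∘ y) = (id2 g ⋆ x) ∘ (id2 g ⋆ y).
Proof. rewrite <- hcomp_vcomp, vid_l. reflexivity. Qed.
Lemma hsplit1 {A A' A''} {g g' : @C1 B A' A''} {f f' : C1 A A'} (b : C2 g g') (a : C2 f f') :
  b ⋆ a = (b ⋆ id2 f') ∘ (id2 g ⋆ a).
Proof. rewrite <- hcomp_vcomp, vid_l, vid_r. reflexivity. Qed.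
Lemma hsplit2 {A A' A''} {g g' : @C1 B A' A''} {f f' : C1 A A'} (b : C2 g g') (a : C2 f f') :
  b ⋆ a = (id2 g' ⋆ a) ∘ (b ⋆ id2 f).
Proof. rewrite <- hcomp_vcomp, vid_l, vid_r. reflexivity. Qed.
Lemma hinvl {A A' A''} {g g' : @C1 B A' A''} (f : C1 A A') (b : C2 g g') :
  vinv (b ⋆ id2 f) = vinv b ⋆ id2 f.
Proof. rewrite <- hcomp_vinv, vinv_id. reflexivity. Qed.
Lemma hinvr {A A' A''} (g : @C1 B A' A'') {f f' : C1 A A'} (a : C2 f f') :
  vinv (id2 g ⋆ a) = id2 g ⋆ vinv a.
Proof. rewrite <- hcomp_vinv, vinv_id. reflexivity. Qed.

(* right un-whiskering *)
Definition PsiR {L M N} (x : @C1 B M N) (f : C1 L M) :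
  C2 x (comp1 (comp1 x f) (inv1 f)) :=
  vinv (ass x f (inv1 f)) ∘ (id2 x ⋆ coev f) ∘ vinv (run x).
Definition RK {L M N} (f : @C1 B L M) {x y : C1 M N} (z : C2 (comp1 x f) (comp1 y f)) : C2 x y :=
  vinv (PsiR y f) ∘ ((z ⋆ id2 (inv1 f)) ∘ PsiR x f).

Lemma rw2 {A A'} {f g h k : @C1 B A A'} (b : C2 g h) (a : C2 f g) (d : C2 k h) (c : C2 f k)
  {f0} (r : C2 f0 f) : b ∘ a = d ∘ c -> b ∘ (a ∘ r) = d ∘ (c ∘ r).
Proof. intro H. rewrite !vassoc, H. reflexivity. Qed.

Lemma nat_inv {A A'} {f g h k : @C1 B A A'} (y : C2 g h) (a : C2 f g) (b : C2 k h) (x : C2 f k) :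
  y ∘ a = b ∘ x -> vinv y ∘ b = a ∘ vinv x.
Proof.
  intro H. rewrite <- (vid_r (vinv y ∘ b)), <- (vinv_r x), vassoc, <- (vassoc (vinv y)), <- H,
    (vassoc (vinv y)), (vinv_l y), vid_l. reflexivity.
Qed.

Ltac rassoc := repeat rewrite <- vassoc.

Lemma interch {A A' A''} {g g' : @C1 B A' A''} {f f' : C1 A A'} (b : C2 g g') (a : C2 f f') :
  (id2 g' ⋆ a) ∘ (b ⋆ id2 f) = (b ⋆ id2 f') ∘ (id2 g ⋆ a).
Proof. rewrite <- hsplit1, <- hsplit2. reflexivity. Qed.

Lemma PsiR_nat {L M N} (f : @C1 B L M) {x y : C1 M N} (a : C2 x y) :
  PsiR y f ∘ a = ((a ⋆ id2 f) ⋆ id2 (inv1 f)) ∘ PsiR x f.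
Proof.
  unfold PsiR. rassoc.
  assert (N1 : vinv (run y) ∘ a = (a ⋆ id2 (unit1 M)) ∘ vinv (run x)).
  { apply nat_inv. apply run_nat. }
  assert (N2 : (id2 y ⋆ coev f) ∘ (a ⋆ id2 (unit1 M)) = (a ⋆ id2 (comp1 f (inv1 f))) ∘ (id2 x ⋆ coev f)).
  { apply interch. }
  assert (N3 : vinv (ass y f (inv1 f)) ∘ (a ⋆ id2 (comp1 f (inv1 f))) = ((a ⋆ id2 f) ⋆ id2 (inv1 f)) ∘ vinv (ass x f (inv1 f))).
  { apply nat_inv. rewrite ass_nat, hcomp_id. reflexivity. }
  rewrite N1. rewrite (rw2 _ _ _ _ _ N2). rewrite (vassoc (vinv _)), N3. rassoc. reflexivity.
Qed.

Lemma RK_h {L M N} (f : @C1 B L M) {x y : C1 M N} (a : C2 x y) : RK f (a ⋆ id2 f) = a.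
Proof. unfold RK. rewrite <- PsiR_nat, vassoc, vinv_l, vid_l. reflexivity. Qed.

Lemma hr_inj {L M N} (f : @C1 B L M) {x y : C1 M N} (a b : C2 x y) : a ⋆ id2 f = b ⋆ id2 f -> a = b.
Proof. intro H. rewrite <- (RK_h f a), <- (RK_h f b), H. reflexivity. Qed.

Lemma RK_inj {L M N} (f : @C1 B L M) {x y : C1 M N} (z w : C2 (comp1 x f) (comp1 y f)) :
  RK f z = RK f w -> z = w.
Proof. unfold RK. intro H. apply vcancel_l in H. apply vcancel_r in H. apply hr_inj in H. exact H. Qed.

Lemma RK_s {L M N} (f : @C1 B L M) {x y : C1 M N} (z : C2 (comp1 x f) (comp1 y f)) :
  RK f z ⋆ id2 f = z.
Proof. apply RK_inj. apply RK_h. Qed.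

(* left un-whiskering *)
Definition PsiL {L M N} (e : @C1 B M N) (x : C1 L M) :
  C2 x (comp1 (inv1 e) (comp1 e x)) :=
  ass (inv1 e) e x ∘ (vinv (ev e) ⋆ id2 x) ∘ vinv (lun x).
Definition LK {L M N} (e : @C1 B M N) {x y : C1 L M} (z : C2 (comp1 e x) (comp1 e y)) : C2 x y :=
  vinv (PsiL e y) ∘ ((id2 (inv1 e) ⋆ z) ∘ PsiL e x).

Lemma PsiL_nat {L M N} (e : @C1 B M N) {x y : C1 L M} (a : C2 x y) :
  PsiL e y ∘ a = (id2 (inv1 e) ⋆ (id2 e ⋆ a)) ∘ PsiL e x.
Proof.
  unfold PsiL. rassoc.
  assert (N1 : vinv (lun y) ∘ a = (id2 (unit1 M) ⋆ a) ∘ vinv (lun x)).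
  { apply nat_inv. apply lun_nat. }
  assert (N2 : (vinv (ev e) ⋆ id2 y) ∘ (id2 (unit1 M) ⋆ a) = (id2 (comp1 (inv1 e) e) ⋆ a) ∘ (vinv (ev e) ⋆ id2 x)).
  { symmetry. apply interch. }
  assert (N3 : ass (inv1 e) e y ∘ (id2 (comp1 (inv1 e) e) ⋆ a) = (id2 (inv1 e) ⋆ (id2 e ⋆ a)) ∘ ass (inv1 e) e x).
  { rewrite <- hcomp_id, ass_nat. reflexivity. }
  rewrite N1. rewrite (rw2 _ _ _ _ _ N2). rewrite (vassoc (ass _ _ _)), N3. rassoc. reflexivity.
Qed.

Lemma LK_h {L M N} (e : @C1 B M N) {x y : C1 L M} (a : C2 x y) : LK e (id2 e ⋆ a) = a.
Proof. unfold LK. rewrite <- PsiL_nat, vassoc, vinv_l, vid_l. reflexivity. Qed.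

Lemma hl_inj {L M N} (e : @C1 B M N) {x y : C1 L M} (a b : C2 x y) : id2 e ⋆ a = id2 e ⋆ b -> a = b.
Proof. intro H. rewrite <- (LK_h e a), <- (LK_h e b), H. reflexivity. Qed.

Lemma LK_inj {L M N} (e : @C1 B M N) {x y : C1 L M} (z w : C2 (comp1 e x) (comp1 e y)) :
  LK e z = LK e w -> z = w.
Proof. unfold LK. intro H. apply vcancel_l in H. apply vcancel_r in H. apply hl_inj in H. exact H. Qed.

Lemma LK_s {L M N} (e : @C1 B M N) {x y : C1 L M} (z : C2 (comp1 e x) (comp1 e y)) :
  id2 e ⋆ LK e z = z.
Proof. apply LK_inj. apply LK_h. Qed.


Lemma K1 {A A' A''} (g : @C1 B A' A'') (f : C1 A A') :
  lun (comp1 g f) ∘ ass (unit1 A'') g f = lun g ⋆ id2 f.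
Proof.
  apply (hl_inj (unit1 A'')).
  apply (vcancel_r _ _ (ass (unit1 A'') (comp1 (unit1 A'') g) f ∘ (ass (unit1 _) (unit1 _) g ⋆ id2 f))).
  rewrite hvr.
  transitivity ((id2 _ ⋆ lun (comp1 g f)) ∘ (ass (unit1 _) (unit1 _) (comp1 g f) ∘ ass (comp1 (unit1 _) (unit1 _)) g f)).
  { rewrite pentagon. rassoc. reflexivity. }
  rewrite vassoc, triangle.
  rewrite <- hcomp_id, <- ass_nat.
  rewrite <- triangle. rewrite (hvl f). rewrite (vassoc (ass _ _ _)), ass_nat. rassoc. reflexivity.
Qed.

Lemma K2 {A A' A''} (g : @C1 B A' A'') (f : C1 A A') :
  run (comp1 g f) = (id2 g ⋆ run f) ∘ ass g f (unit1 A).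
Proof.
  apply (hr_inj (unit1 A)).
  apply (vcancel_l _ _ (ass g f (unit1 A))).
  rewrite <- (triangle (comp1 g f) (unit1 A)), (hvl (unit1 A)).
  rewrite vassoc, <- (hcomp_id g f), ass_nat. rassoc. rewrite pentagon. rassoc.
  rewrite (vassoc (id2 g ⋆ (id2 f ⋆ lun (unit1 A)))), <- (hvr g), triangle.
  rewrite vassoc, <- ass_nat. rassoc. reflexivity.
Qed.

Lemma K3 (A : C0 B) : lun (unit1 A) = run (unit1 A).
Proof.
  assert (E : id2 (unit1 A) ⋆ lun (unit1 A) = lun (comp1 (unit1 A) (unit1 A))).
  { apply (vcancel_l _ _ (lun (unit1 A))). apply lun_nat. }
  apply (hr_inj (unit1 A)). rewrite <- K1, <- triangle, E. reflexivity.
Qed.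

End G.


Section P.
Context {B : Bigroupoid}.
Local Notation "b ∘ a" := (vcomp b a) (at level 40, left associativity).
Local Notation "b ⋆ a" := (hcomp b a) (at level 35).
Ltac rassoc := repeat rewrite <- vassoc.

Lemma hc_l {A A' A''} {g g' : @C1 B A' A''} {f f' f'' : C1 A A'}
  (s : C2 f' f'') (u : C2 g g') (v : C2 f f') : (id2 g' ⋆ s) ∘ (u ⋆ v) = u ⋆ (s ∘ v).
Proof. rewrite <- hcomp_vcomp, vid_l. reflexivity. Qed.
Lemma hc_r {A A' A''} {g g' g'' : @C1 B A' A''} {f f' : C1 A A'}
  (s : C2 g' g'') (u : C2 g g') (v : C2 f f') : (s ⋆ id2 f') ∘ (u ⋆ v) = (s ∘ u) ⋆ v.
Proof. rewrite <- hcomp_vcomp, vid_l. reflexivity. Qed.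

Lemma hs_r {A A' A''} {g g' : @C1 B A' A''} {f f' f'' : C1 A A'}
  (u : C2 g g') (t : C2 f' f'') (s : C2 f f') : u ⋆ (t ∘ s) = (u ⋆ t) ∘ (id2 g ⋆ s).
Proof. rewrite <- hcomp_vcomp, vid_r. reflexivity. Qed.
Lemma hs_l {A A' A''} {g g' g'' : @C1 B A' A''} {f f' : C1 A A'}
  (t : C2 g' g'') (s : C2 g g') (u : C2 f f') : (t ∘ s) ⋆ u = (t ⋆ u) ∘ (s ⋆ id2 f).
Proof. rewrite <- hcomp_vcomp, vid_r. reflexivity. Qed.

Lemma ass_nat_inv {A A' A'' A'''} (h h' : @C1 B A'' A''') (g g' : C1 A' A'')
  (f f' : C1 A A') (c : C2 h h') (b : C2 g g') (a : C2 f f') :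
  vinv (ass h' g' f') ∘ (c ⋆ (b ⋆ a)) = ((c ⋆ b) ⋆ a) ∘ vinv (ass h g f).
Proof. apply nat_inv. apply ass_nat. Qed.

Section Sq.
Context {x1 x2 y1 y2 z1 z2 : C0 B} {a : C1 x2 x1} {b : C1 y2 y1} {c : C1 z2 z1}.

Definition Sig {g1 : C1 y1 z1} {g2 : C1 y2 z2} {f1 : C1 x1 y1} {f2 : C1 x2 y2}
  (t : C2 (comp1 g1 b) (comp1 c g2)) (s : C2 (comp1 f1 a) (comp1 b f2)) :
  C2 (comp1 (comp1 g1 f1) a) (comp1 c (comp1 g2 f2)) :=
  ass c g2 f2 ∘ ((t ⋆ id2 f2) ∘ (vinv (ass g1 b f2) ∘ ((id2 g1 ⋆ s) ∘ ass g1 f1 a))).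

Lemma Sig_nat {g1 g1' : C1 y1 z1} {g2 g2' : C1 y2 z2} {f1 f1' : C1 x1 y1} {f2 f2' : C1 x2 y2}
  (t : C2 (comp1 g1 b) (comp1 c g2)) (s : C2 (comp1 f1 a) (comp1 b f2))
  (t' : C2 (comp1 g1' b) (comp1 c g2')) (s' : C2 (comp1 f1' a) (comp1 b f2'))
  (a1 : C2 f1 f1') (a2 : C2 f2 f2') (b1 : C2 g1 g1') (b2 : C2 g2 g2') :
  s' ∘ (a1 ⋆ id2 a) = (id2 b ⋆ a2) ∘ s ->
  t' ∘ (b1 ⋆ id2 b) = (id2 c ⋆ b2) ∘ t ->
  Sig t' s' ∘ ((b1 ⋆ a1) ⋆ id2 a) = (id2 c ⋆ (b2 ⋆ a2)) ∘ Sig t s.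
Proof.
  intros Hs Ht. unfold Sig. rassoc.
  rewrite ass_nat.
  rewrite (vassoc (id2 g1' ⋆ s')), hc_l, Hs, hs_r. rassoc.
  rewrite (vassoc (vinv (ass g1' b f2'))), ass_nat_inv. rassoc.
  rewrite (vassoc (t' ⋆ id2 f2')), hc_r, Ht, hs_l. rassoc.
  rewrite (vassoc (ass c g2' f2')), ass_nat. rassoc. reflexivity.
Qed.
End Sq.

Lemma ass_nat' {A A' A'' A'''} {h h' : @C1 B A'' A'''} {g g' : C1 A' A''}
  {f f' : C1 A A'} (c : C2 h h') (b : C2 g g') (a : C2 f f') :
  (c ⋆ b) ⋆ a = vinv (ass h' g' f') ∘ ((c ⋆ (b ⋆ a)) ∘ ass h g f).
Proof. rewrite <- ass_nat, vassoc, vinv_l, vid_l. reflexivity. Qed.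

Lemma pent_inv {A A' A'' A''' A''''} (k : @C1 B A''' A'''') (h : C1 A'' A''') (g : C1 A' A'') (f : C1 A A') :
  vinv (ass (comp1 k h) g f) ∘ vinv (ass k h (comp1 g f))
  = (vinv (ass k h g) ⋆ id2 f) ∘ (vinv (ass k (comp1 h g) f) ∘ (id2 k ⋆ vinv (ass h g f))).
Proof. rewrite <- vinv_vcomp, pentagon, !vinv_vcomp, hinvl, hinvr. rassoc. reflexivity. Qed.

Lemma pent_c1 {A A' A'' A''' A''''} (k : @C1 B A''' A'''') (h : C1 A'' A''') (g : C1 A' A'') (f : C1 A A')
  {x : C1 A A''''} (r : C2 x _) :
  (id2 k ⋆ ass h g f) ∘ (ass k (comp1 h g) f ∘ ((ass k h g ⋆ id2 f) ∘ (vinv (ass (comp1 k h) g f) ∘ r)))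
  = ass k h (comp1 g f) ∘ r.
Proof.
  transitivity (((id2 k ⋆ ass h g f) ∘ (ass k (comp1 h g) f ∘ (ass k h g ⋆ id2 f))) ∘ (vinv (ass (comp1 k h) g f) ∘ r)).
  { rassoc. reflexivity. }
  rewrite <- pentagon. rassoc. rewrite (vassoc (ass (comp1 k h) g f)), (vinv_r (ass (comp1 k h) g f)), vid_l.
  reflexivity.
Qed.

Lemma pent_c2 {A A' A'' A''' A''''} (k : @C1 B A''' A'''') (h : C1 A'' A''') (g : C1 A' A'') (f : C1 A A')
  {x : C1 A _} (r : C2 x _) :
  ass (comp1 k h) g f ∘ ((vinv (ass k h g) ⋆ id2 f) ∘ (vinv (ass k (comp1 h g) f) ∘ r))
  = vinv (ass k h (comp1 g f)) ∘ ((id2 k ⋆ ass h g f) ∘ r).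
Proof.
  apply (vcancel_l _ _ (ass k h (comp1 g f))).
  rewrite !vassoc, pentagon, (vinv_r (ass k h (comp1 g f))), vid_l. rassoc.
  rewrite (vassoc (ass k h g ⋆ id2 f)), <- hvl, (vinv_r (ass k h g)), hcomp_id, vid_l.
  rewrite (vassoc (ass k (comp1 h g) f)), (vinv_r (ass k (comp1 h g) f)), vid_l. reflexivity.
Qed.

Lemma inv_c {A A' A''} {g g' : @C1 B A' A''} (f : C1 A A') (u : C2 g g') {x : C1 A _} (r : C2 x _) :
  (u ⋆ id2 f) ∘ ((vinv u ⋆ id2 f) ∘ r) = r.
Proof. rewrite vassoc, <- hvl, (vinv_r u), hcomp_id, vid_l. reflexivity. Qed.

Lemma Sig_ass {x1 x2 y1 y2 z1 z2 w1 w2 : C0 B} {a : C1 x2 x1} {b : C1 y2 y1} {c : C1 z2 z1} {d : C1 w2 w1}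
  {h1 : C1 z1 w1} {h2 : C1 z2 w2} {g1 : C1 y1 z1} {g2 : C1 y2 z2} {f1 : C1 x1 y1} {f2 : C1 x2 y2}
  (r : C2 (comp1 h1 c) (comp1 d h2)) (t : C2 (comp1 g1 b) (comp1 c g2)) (s : C2 (comp1 f1 a) (comp1 b f2)) :
  Sig r (Sig t s) ∘ (ass h1 g1 f1 ⋆ id2 a) = (id2 d ⋆ ass h2 g2 f2) ∘ Sig (Sig r t) s.
Proof.
  unfold Sig. rewrite !hvr, !(hvl f2). rassoc.
  rewrite <- (hcomp_id h1 g1), (ass_nat' (id2 h1) (id2 g1) s). rassoc. rewrite pentagon.
  rewrite (vassoc (vinv (ass (comp1 h1 g1) b f2))), pent_inv. rassoc.
  rewrite inv_c.
  rewrite (vassoc ((id2 h1 ⋆ t) ⋆ id2 f2)), <- ass_nat_inv. rassoc.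
  rewrite (ass_nat' r (id2 g2) (id2 f2)), (hcomp_id g2 f2). rassoc.
  rewrite pent_c1, pent_c2. reflexivity.
Qed.

Definition U {x1 x2 : C0 B} (e : C1 x2 x1) : C2 (comp1 (unit1 x1) e) (comp1 e (unit1 x2)) :=
  vinv (run e) ∘ lun e.

Lemma Sig_lun {x1 x2 y1 y2 : C0 B} {a : C1 x2 x1} {b : C1 y2 y1} {f1 : C1 x1 y1} {f2 : C1 x2 y2}
  (s : C2 (comp1 f1 a) (comp1 b f2)) :
  s ∘ (lun f1 ⋆ id2 a) = (id2 b ⋆ lun f2) ∘ Sig (U b) s.
Proof.
  unfold Sig, U. rewrite (vassoc (id2 b ⋆ lun f2)), triangle, (hvl f2). rassoc.
  rewrite (vassoc (run b ⋆ id2 f2)), <- (hvl f2), (vinv_r (run b)), hcomp_id, vid_l.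
  rewrite <- (K1 b f2). rassoc. rewrite (vassoc (ass (unit1 y1) b f2)), (vinv_r (ass (unit1 y1) b f2)), vid_l.
  rewrite (vassoc (lun (comp1 b f2))), lun_nat. rassoc. rewrite K1. reflexivity.
Qed.

Lemma Sig_run {x1 x2 y1 y2 : C0 B} {a : C1 x2 x1} {b : C1 y2 y1} {f1 : C1 x1 y1} {f2 : C1 x2 y2}
  (s : C2 (comp1 f1 a) (comp1 b f2)) :
  s ∘ (run f1 ⋆ id2 a) = (id2 b ⋆ run f2) ∘ Sig s (U a).
Proof.
  unfold Sig, U. rewrite (vassoc (id2 b ⋆ run f2)), <- K2.
  rewrite (vassoc (run (comp1 b f2))), run_nat. rassoc.
  rewrite (K2 f1 a). rassoc. rewrite (vassoc (ass f1 a (unit1 x2))), (vinv_r (ass f1 a (unit1 x2))), vid_l.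
  rewrite (vassoc (id2 f1 ⋆ run a)), <- hvr, (vassoc (run a)), (vinv_r (run a)), vid_l.
  rewrite triangle. reflexivity.
Qed.
End P.


Section Q.
Context {B : Bigroupoid}.
Local Notation "b ∘ a" := (vcomp b a) (at level 40, left associativity).
Local Notation "b ⋆ a" := (hcomp b a) (at level 35).
Ltac rassoc := repeat rewrite <- vassoc.

Record P0 := mkP0 { q1 : C0 B; q2 : C0 B; qe : C1 q2 q1 }.
Record P1 (X Y : P0) := mkP1 { r1 : C1 (q1 X) (q1 Y); r2 : C1 (q2 X) (q2 Y);
  rs : C2 (comp1 r1 (qe X)) (comp1 (qe Y) r2) }.
Arguments mkP1 {X Y}.
Arguments r1 {X Y}.
Arguments r2 {X Y}.
Arguments rs {X Y}.

Definition cpt {X Y} (f g : P1 X Y) (a1 : C2 (r1 f) (r1 g)) (a2 : C2 (r2 f) (r2 g)) : Prop :=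
  rs g ∘ (a1 ⋆ id2 (qe X)) = (id2 (qe Y) ⋆ a2) ∘ rs f.

Definition Th {X Y} (f g : P1 X Y) (a1 : C2 (r1 f) (r1 g)) : C2 (r2 f) (r2 g) :=
  LK (qe Y) (rs g ∘ ((a1 ⋆ id2 (qe X)) ∘ vinv (rs f))).

Lemma ThE {X Y} (f g : P1 X Y) a1 a2 : cpt f g a1 a2 -> Th f g a1 = a2.
Proof.
  unfold cpt, Th. intro H. rewrite vassoc, H, <- vassoc, (vinv_r (rs f)), vid_r. apply LK_h.
Qed.

Lemma ThC {X Y} (f g : P1 X Y) a1 : cpt f g a1 (Th f g a1).
Proof.
  unfold cpt, Th. rewrite LK_s. rassoc. rewrite (vinv_l (rs f)), vid_r. reflexivity.
Qed.

Lemma cpt_uniq {X Y} (f g : P1 X Y) a1 a2 a2' : cpt f g a1 a2 -> cpt f g a1 a2' -> a2 = a2'.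
Proof. intros H H'. rewrite <- (ThE _ _ _ _ H), <- (ThE _ _ _ _ H'). reflexivity. Qed.

Lemma cpt_id {X Y} (f : P1 X Y) : cpt f f (id2 (r1 f)) (id2 (r2 f)).
Proof. unfold cpt. rewrite !hcomp_id, vid_l, vid_r. reflexivity. Qed.

Lemma cpt_vcomp {X Y} (f g h : P1 X Y) a1 a2 b1 b2 :
  cpt f g a1 a2 -> cpt g h b1 b2 -> cpt f h (b1 ∘ a1) (b2 ∘ a2).
Proof.
  unfold cpt. intros Ha Hb. rewrite (hvl (qe X)), vassoc, Hb, <- vassoc, Ha, hvr. rassoc. reflexivity.
Qed.

Definition pcomp {X Y Z} (g : P1 Y Z) (f : P1 X Y) : P1 X Z :=
  mkP1 (comp1 (r1 g) (r1 f)) (comp1 (r2 g) (r2 f)) (Sig (rs g) (rs f)).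
Definition punit (X : P0) : P1 X X := mkP1 (unit1 (q1 X)) (unit1 (q2 X)) (U (qe X)).

Definition Wc {X Y} (f : P1 X Y) :
  C2 (comp1 (comp1 (inv1 (r1 f)) (r1 f)) (qe X)) (comp1 (qe X) (comp1 (inv1 (r2 f)) (r2 f))) :=
  vinv (id2 (qe X) ⋆ ev (r2 f)) ∘ (U (qe X) ∘ (ev (r1 f) ⋆ id2 (qe X))).

Definition Isq {X Y} (f : P1 X Y) : C2 (comp1 (inv1 (r1 f)) (qe Y)) (comp1 (qe X) (inv1 (r2 f))) :=
  RK (r2 f) (vinv (ass (qe X) (inv1 (r2 f)) (r2 f)) ∘ (Wc f ∘ (vinv (ass (inv1 (r1 f)) (r1 f) (qe X))
     ∘ (vinv (id2 (inv1 (r1 f)) ⋆ rs f) ∘ ass (inv1 (r1 f)) (qe Y) (r2 f))))).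

Definition pinv {X Y} (f : P1 X Y) : P1 Y X := mkP1 (inv1 (r1 f)) (inv1 (r2 f)) (Isq f).

Lemma Sig_Isq {X Y} (f : P1 X Y) : Sig (Isq f) (rs f) = Wc f.
Proof.
  unfold Sig, Isq. rewrite RK_s. rassoc.
  rewrite (vassoc (ass (qe X) (inv1 (r2 f)) (r2 f))), (vinv_r (ass (qe X) (inv1 (r2 f)) (r2 f))), vid_l.
  rewrite (vassoc (ass (inv1 (r1 f)) (qe Y) (r2 f))), (vinv_r (ass (inv1 (r1 f)) (qe Y) (r2 f))), vid_l.
  rewrite (vassoc (vinv (id2 (inv1 (r1 f)) ⋆ rs f))), (vinv_l (id2 (inv1 (r1 f)) ⋆ rs f)), vid_l.
  rewrite (vinv_l (ass (inv1 (r1 f)) (r1 f) (qe X))), vid_r. reflexivity.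
Qed.

Lemma Sig_inj {x1 x2 y1 y2 z1 z2 : C0 B} {a : C1 x2 x1} {b : C1 y2 y1} {c : C1 z2 z1}
  {g1 : C1 y1 z1} {g2 : C1 y2 z2} {f1 : C1 x1 y1} {f2 : C1 x2 y2}
  (t t' : C2 (comp1 g1 b) (comp1 c g2)) (s : C2 (comp1 f1 a) (comp1 b f2)) :
  Sig t s = Sig t' s -> t = t'.
Proof.
  unfold Sig. intro H. apply vcancel_l in H. apply vcancel_r in H. apply hr_inj in H. exact H.
Qed.


Lemma cpt_hcomp {X Y Z} (g g' : P1 Y Z) (f f' : P1 X Y) a1 a2 b1 b2 :
  cpt f f' a1 a2 -> cpt g g' b1 b2 -> cpt (pcomp g f) (pcomp g' f') (b1 ⋆ a1) (b2 ⋆ a2).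
Proof. unfold cpt; cbn. intros Ha Hb. apply Sig_nat; assumption. Qed.

Lemma cpt_ass {X Y Z W} (h : P1 Z W) (g : P1 Y Z) (f : P1 X Y) :
  cpt (pcomp (pcomp h g) f) (pcomp h (pcomp g f)) (ass (r1 h) (r1 g) (r1 f)) (ass (r2 h) (r2 g) (r2 f)).
Proof. unfold cpt; cbn. apply Sig_ass. Qed.

Lemma cpt_lun {X Y} (f : P1 X Y) : cpt (pcomp (punit Y) f) f (lun (r1 f)) (lun (r2 f)).
Proof. unfold cpt; cbn. apply Sig_lun. Qed.

Lemma cpt_run {X Y} (f : P1 X Y) : cpt (pcomp f (punit X)) f (run (r1 f)) (run (r2 f)).
Proof. unfold cpt; cbn. apply Sig_run. Qed.

Lemma cpt_ev {X Y} (f : P1 X Y) : cpt (pcomp (pinv f) f) (punit X) (ev (r1 f)) (ev (r2 f)).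
Proof.
  unfold cpt; cbn. rewrite Sig_Isq. unfold Wc. rewrite vassoc, (vinv_r (id2 (qe X) ⋆ ev (r2 f))), vid_l.
  reflexivity.
Qed.

Lemma cpt_coev {X Y} (f : P1 X Y) : cpt (punit Y) (pcomp f (pinv f)) (coev (r1 f)) (coev (r2 f)).
Proof.
  set (x := Th (punit Y) (pcomp f (pinv f)) (coev (r1 f))).
  assert (Hx : cpt (punit Y) (pcomp f (pinv f)) (coev (r1 f)) x) by apply ThC.
  assert (Z1 := cpt_hcomp _ _ _ _ _ _ _ _ (cpt_id f) Hx).
  assert (Z2 := cpt_ass f (pinv f) f).
  assert (Z3 := cpt_hcomp _ _ _ _ _ _ _ _ (cpt_ev f) (cpt_id f)).
  assert (Z4 := cpt_run f).
  assert (Z := cpt_vcomp _ _ _ _ _ _ _ (cpt_vcomp _ _ _ _ _ _ _ (cpt_vcomp _ _ _ _ _ _ _ Z1 Z2) Z3) Z4).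
  cbn in Z. rewrite (ev_coev (r1 f)) in Z.
  assert (E := cpt_uniq _ _ _ _ _ Z (cpt_lun f)).
  rewrite <- (ev_coev (r2 f)) in E.
  apply vcancel_l, vcancel_l, vcancel_l, hr_inj in E.
  rewrite <- E. exact Hx.
Qed.

Lemma cpt_inv2 {X Y} (f g : P1 X Y) a1 a2 : cpt f g a1 a2 -> cpt (pinv f) (pinv g) (inv2 a1) (inv2 a2).
Proof.
  intro H.
  set (z := vinv (id2 (qe X) ⋆ inv2 a2) ∘ (Isq g ∘ (inv2 a1 ⋆ id2 (qe Y)))).
  set (pf := @mkP1 Y X (inv1 (r1 f)) (inv1 (r2 f)) z).
  assert (H1 : cpt pf (pinv g) (inv2 a1) (inv2 a2)).
  { unfold cpt; cbn. unfold z. rewrite vassoc, (vinv_r (id2 (qe X) ⋆ inv2 a2)), vid_l. reflexivity. }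
  assert (H2 := cpt_vcomp _ _ _ _ _ _ _ (cpt_hcomp _ _ _ _ _ _ _ _ H H1) (cpt_ev g)).
  cbn in H2. rewrite (ev_nat a1), (ev_nat a2) in H2.
  unfold cpt in H2; cbn in H2.
  assert (E : Sig z (rs f) = Sig (Isq f) (rs f)).
  { rewrite Sig_Isq. unfold Wc. rewrite H2, vassoc, (vinv_l (id2 (qe X) ⋆ ev (r2 f))), vid_l. reflexivity. }
  apply Sig_inj in E.
  unfold cpt; cbn. rewrite <- E. exact H1.
Qed.

Lemma Th_id {X Y} (f : P1 X Y) : Th f f (id2 (r1 f)) = id2 (r2 f).
Proof. apply ThE, cpt_id. Qed.
Lemma Th_vcomp {X Y} (f g h : P1 X Y) a b : Th f h (b ∘ a) = Th g h b ∘ Th f g a.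
Proof. apply ThE, cpt_vcomp; apply ThC. Qed.
Lemma Th_hcomp {X Y Z} (g g' : P1 Y Z) (f f' : P1 X Y) b a :
  Th (pcomp g f) (pcomp g' f') (b ⋆ a) = Th g g' b ⋆ Th f f' a.
Proof. apply ThE, cpt_hcomp; apply ThC. Qed.
Lemma Th_ass {X Y Z W} (h : P1 Z W) (g : P1 Y Z) (f : P1 X Y) :
  Th (pcomp (pcomp h g) f) (pcomp h (pcomp g f)) (ass (r1 h) (r1 g) (r1 f)) = ass (r2 h) (r2 g) (r2 f).
Proof. apply ThE, cpt_ass. Qed.
Lemma Th_lun {X Y} (f : P1 X Y) : Th (pcomp (punit Y) f) f (lun (r1 f)) = lun (r2 f).
Proof. apply ThE, cpt_lun. Qed.
Lemma Th_run {X Y} (f : P1 X Y) : Th (pcomp f (punit X)) f (run (r1 f)) = run (r2 f).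
Proof. apply ThE, cpt_run. Qed.
Lemma Th_ev {X Y} (f : P1 X Y) : Th (pcomp (pinv f) f) (punit X) (ev (r1 f)) = ev (r2 f).
Proof. apply ThE, cpt_ev. Qed.
Lemma Th_coev {X Y} (f : P1 X Y) : Th (punit Y) (pcomp f (pinv f)) (coev (r1 f)) = coev (r2 f).
Proof. apply ThE, cpt_coev. Qed.
Lemma Th_inv2 {X Y} (f g : P1 X Y) a : Th (pinv f) (pinv g) (inv2 a) = inv2 (Th f g a).
Proof. apply ThE, cpt_inv2, ThC. Qed.

Definition PBG : Bigroupoid := {|
  C0 := P0; C1 := P1; C2 := fun X Y f g => @C2 B _ _ (r1 f) (r1 g);
  vcomp := fun X Y f g h b a => vcomp b a;
  id2 := fun X Y f => id2 (r1 f);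
  vinv := fun X Y f g a => vinv a;
  vassoc := fun X Y f g h k c b a => vassoc c b a;
  vid_l := fun X Y f g a => vid_l a; vid_r := fun X Y f g a => vid_r a;
  vinv_l := fun X Y f g a => vinv_l a; vinv_r := fun X Y f g a => vinv_r a;
  comp1 := @pcomp; hcomp := fun X Y Z g g' f f' b a => hcomp b a;
  hcomp_id := fun X Y Z g f => hcomp_id (r1 g) (r1 f);
  hcomp_vcomp := fun X Y Z g g' g'' f f' f'' b' b a' a => hcomp_vcomp b' b a' a;
  unit1 := punit; inv1 := @pinv; inv2 := fun X Y f g a => inv2 a;
  inv2_id := fun X Y f => inv2_id (r1 f);
  inv2_vcomp := fun X Y f g h b a => inv2_vcomp b a;
  ass := fun X Y Z W h g f => ass (r1 h) (r1 g) (r1 f);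
  ass_nat := fun X Y Z W h h' g g' f f' c b a => ass_nat c b a;
  lun := fun X Y f => lun (r1 f); lun_nat := fun X Y f f' a => lun_nat a;
  run := fun X Y f => run (r1 f); run_nat := fun X Y f f' a => run_nat a;
  ev := fun X Y f => ev (r1 f); ev_nat := fun X Y f f' a => ev_nat a;
  coev := fun X Y f => coev (r1 f); coev_nat := fun X Y f f' a => coev_nat a;
  pentagon := fun X Y Z W V k h g f => pentagon (r1 k) (r1 h) (r1 g) (r1 f);
  triangle := fun X Y Z g f => triangle (r1 g) (r1 f);
  ev_coev := fun X Y f => ev_coev (r1 f) |}.

Definition STd : MorphData PBG (ProdBG B B) :=
  @mkMorphData PBG (ProdBG B B) (fun X => (q1 X, q2 X))
    (fun X Y f => (r1 f, r2 f))
    (fun X Y f g a => (a, Th f g a))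
    (fun X Y Z g f => (id2 (comp1 (r1 g) (r1 f)), id2 (comp1 (r2 g) (r2 f))))
    (fun X => (id2 (unit1 (q1 X)), id2 (unit1 (q2 X))))
    (fun X Y f => (id2 (inv1 (r1 f)), id2 (inv1 (r2 f)))).

Lemma ST_laws : IsMorph STd.
Proof.
  split; intros; cbn; unfold pvcomp, phcomp, pid2, pinv2, pass, prun, plun, pev, pcoev; cbn; f_equal.
  all: try rewrite Th_id; try rewrite Th_vcomp; try rewrite Th_hcomp; try rewrite Th_inv2;
    try rewrite Th_ass; try rewrite Th_run; try rewrite Th_lun; try rewrite Th_ev; try rewrite Th_coev.
  all: repeat rewrite hcomp_id; repeat rewrite vid_l; repeat rewrite vid_r; reflexivity.
Qed.

Definition ST : Morph PBG (ProdBG B B) := mkMorph STd ST_laws.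

Definition s0 {A A'} (f : @C1 B A A') : C2 (comp1 f (unit1 A)) (comp1 (unit1 A') f) :=
  vinv (lun f) ∘ run f.

Definition Rd : MorphData B PBG :=
  @mkMorphData B PBG (fun A => mkP0 A A (unit1 A)) (fun A A' f => @mkP1 (mkP0 A A (unit1 A)) (mkP0 A' A' (unit1 A')) f f (s0 f))
    (fun A A' f g a => a) (fun A A' A'' g f => id2 (comp1 g f)) (fun A => id2 (unit1 A))
    (fun A A' f => id2 (inv1 f)).

Lemma R_laws : IsMorph Rd.
Proof.
  split; intros; cbn; repeat rewrite hcomp_id; repeat rewrite vid_l; repeat rewrite vid_r; reflexivity.
Qed.

Definition R : Morph B PBG := mkMorph Rd R_laws.

Lemma Sig_s0 {A A' A''} (g : @C1 B A' A'') (f : C1 A A') : Sig (s0 g) (s0 f) = s0 (comp1 g f).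
Proof.
  unfold Sig, s0. rewrite (hvl f), (hvr g). rassoc.
  assert (T1 : (run g ⋆ id2 f) ∘ vinv (ass g (unit1 A') f) = id2 g ⋆ lun f).
  { rewrite <- triangle, <- vassoc, (vinv_r (ass g (unit1 A') f)), vid_r. reflexivity. }
  rewrite (vassoc (run g ⋆ id2 f)), T1.
  rewrite (vassoc (id2 g ⋆ lun f)), <- hvr, (vinv_r (lun f)), hcomp_id, vid_l.
  rewrite <- (K2 g f).
  assert (T2 : ass (unit1 A'') g f ∘ (vinv (lun g) ⋆ id2 f) = vinv (lun (comp1 g f))).
  { rewrite <- hinvl, <- K1, vinv_vcomp, vassoc, (vinv_r (ass (unit1 A'') g f)), vid_l. reflexivity. }
  rewrite vassoc, T2. reflexivity.
Qed.

Lemma s0_nat {A A'} (f g : @C1 B A A') (a : C2 f g) : s0 g ∘ (a ⋆ id2 (unit1 A)) = (id2 (unit1 A') ⋆ a) ∘ s0 f.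
Proof.
  unfold s0. rewrite <- vassoc, run_nat, vassoc, vassoc. f_equal. apply nat_inv. apply lun_nat.
Qed.

Lemma U1 (A : C0 B) : U (unit1 A) = s0 (unit1 A).
Proof. unfold U, s0. rewrite K3. reflexivity. Qed.

Lemma Isq_R {A A'} (f : @C1 B A A') : Isq (@mkP1 (mkP0 A A (unit1 A)) (mkP0 A' A' (unit1 A')) f f (s0 f)) = s0 (inv1 f).
Proof.
  pose proof (Sig_Isq (@mkP1 (mkP0 A A (unit1 A)) (mkP0 A' A' (unit1 A')) f f (s0 f))) as E. cbn in E.
  apply (Sig_inj _ _ (s0 f)). transitivity (s0 (comp1 (inv1 f) f)). 2: symmetry; apply Sig_s0.
  etransitivity; [exact E|]. unfold Wc; cbn. rewrite U1.
  unfold s0. rewrite K3, (vinv_l (run (unit1 A))), vid_l.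
  apply (vcancel_l _ _ (id2 (unit1 A) ⋆ ev f)).
  rewrite vassoc, (vinv_r (id2 (unit1 A) ⋆ ev f)), vid_l.
  rewrite vassoc, <- (nat_inv _ _ _ _ (lun_nat (ev f))), K3.
  apply (vcancel_l _ _ (run (unit1 A))). rewrite run_nat, !vassoc, (vinv_r (run (unit1 A))), vid_l.
  reflexivity.
Qed.

Lemma data_eq : mcomp_data STd Rd = diag_data B.
Proof.
  unfold mcomp_data, diag_data. cbn. f_equal.
  all: repeat (apply functional_extensionality_dep; intro).
  all: cbn; unfold pvcomp; cbn.
  - f_equal. apply ThE. unfold cpt; cbn. apply s0_nat.
  - f_equal. apply vid_l. rewrite vid_r. match goal with |- Th ?f ?g ?a = ?b => apply (ThE f g a b) end. unfold cpt; cbn. rewrite !hcomp_id, vid_l, vid_r.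
    symmetry. apply Sig_s0.
  - f_equal. apply vid_l. rewrite vid_r. match goal with |- Th ?f ?g ?a = ?b => apply (ThE f g a b) end. unfold cpt; cbn. rewrite !hcomp_id, vid_l, vid_r.
    symmetry. apply U1.
  - f_equal. apply vid_l. rewrite vid_r. match goal with |- Th ?f ?g ?a = ?b => apply (ThE f g a b) end. unfold cpt; cbn. rewrite !hcomp_id, vid_l, vid_r.
    symmetry. apply Isq_R.
Qed.
End Q.

Lemma morph_eq {B C : Bigroupoid} (F G : Morph B C) : mdata F = mdata G -> F = G.
Proof. destruct F as [F HF], G as [G HG]; cbn; intro E; subst; f_equal; apply proof_irrelevance. Qed.

Theorem lemma5p11 (B : Bigroupoid) :
  exists (PB : Bigroupoid) (R : Morph B PB) (ST : Morph PB (ProdBG B B)),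
    mcomp ST R = diag B /\ weak_equivalence R /\ fibration ST.
Proof.
  exists (@PBG B), (@R B), (@ST B). split; [|split].
  - apply morph_eq. cbn. apply data_eq.
  - split.
    + intro X. exists (q1 X). constructor. cbn.
      exact (@mkP1 _ X (mkP0 (q1 X) (q1 X) (unit1 _)) (unit1 (q1 X)) (qe X) (id2 _)).
    + intros A A'. exists (fun x => @r1 _ _ _ x), (fun x y a => a). split; [|split; [|split]].
      * intros; reflexivity.
      * intros; reflexivity.
      * exists (fun a => id2 a). intros; cbn. rewrite vid_l, vid_r. reflexivity.
      * exists (fun x => id2 (@r1 _ _ _ x)). intros; cbn. rewrite vid_l, vid_r. reflexivity.
  - split.
    + intros A' X b. destruct X as [X1 X2]. destruct b as [b1 b2]. cbn in b1, b2.
      set (w := comp1 (qe A') b2).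
      exists (mkP0 X1 X2 (comp1 (inv1 b1) w)).
      exists (@mkP1 _ (mkP0 X1 X2 (comp1 (inv1 b1) w)) A' b1 b2
        (vcomp (lun w) (vcomp (hcomp (vinv (coev b1)) (id2 w)) (vinv (ass b1 (inv1 b1) w))))).
      reflexivity.
    + intros A A' a' b beta. destruct b as [b1 b2]; destruct beta as [be1 be2]; cbn in *.
      exists (@mkP1 _ A A' b1 b2 (vcomp (vinv (hcomp (id2 (qe A')) be2)) (vcomp (@rs _ _ _ a') (hcomp be1 (id2 (qe A)))))).
      exists be1. cbn. f_equal. f_equal.
      match goal with |- Th ?f ?g ?a = ?b => apply (ThE f g a b) end.
      unfold cpt; cbn. rewrite vassoc, (vinv_r (hcomp (id2 (qe A')) be2)), vid_l. reflexivity.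
Qed.
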